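(* Let $G=(V,E)$ be a strongly connected digraph with $V=\{v_1,\dots,v_n\}$. Then every evolution $(A_k)_{k\geq 0}$ of the set-valued map $f_{\mathrm{imcor}}$ on $\operatorname{Adj}(G)$ (i.e., any $A_0\in\operatorname{Adj}(G)$ and $A_{k+1}\in f_{\mathrm{imcor}}(A_k)$ for all $k$) converges in finite time to a weight-balanced adjacency matrix: there exists $K$ such that $A_K$ is weight-balanced and $A_k=A_K$ for all $k\geq K$.
   Context: A digraph $G=(V,E)$ has finite vertex set $V$ and edge set $E\subseteq V\times V$; it is strongly connected if there is a directed path between every ordered pair of distinct vertices. $\operatorname{Adj}(G)$ is the set of matrices $A=(a_{ij})\in\mathbb{R}^{n\times n}_{\geq0}$ with $a_{ij}>0$ if $(v_i,v_j)\in E$ and $a_{ij}=0$ otherwise. For $A\in\operatorname{Adj}(G)$, the imbalance of $v_i$ is $\omega(v_i)=\sum_{j}a_{ji}-\sum_j a_{ij}$, and $A$ is weight-balanced if $\omega(v_i)=0$ for all $i$. For $A\in\operatorname{Adj}(G)$ and each $i$, let $a_i^*=\min\{a_{ik}: k\in\{1,\dots,n\}\setminus\{i\},\ a_{ik}\neq0\}$ and $J_i^*=\{j\in\{1,\dots,n\}\setminus\{i\}: a_{ij}=a_i^*\}$. The map $f_{\mathrm{imcor}}:\operatorname{Adj}(G)\rightrightarrows\operatorname{Adj}(G)$ assigns to $A$ the set of all $B\in\operatorname{Adj}(G)$ such that for each $i$ there exists $j_i^*\in J_i^*$ with $b_{ij}=a_{ij}+\omega(v_i)$ if $\omega(v_i)>0$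 and $j=j_i^*$, and $b_{ij}=a_{ij}$ otherwise (imbalances computed with respect to $A$). This models a synchronous algorithm in which each agent with positive imbalance adds its imbalance to one of its out-edges (to a vertex other than itself) of minimum weight. *)

(* Defs.v *)
From mathcomp Require Import all_boot all_order all_algebra.
From mathcomp Require Import reals.
Set Implicit Arguments. Unset Strict Implicit. Unset Printing Implicit Defensive.
Import Order.TTheory GRing.Theory Num.Theory.
Local Open Scope ring_scope.

(* Digraph G = (V, E) with V = 'I_n (vertex v_i is i), E given by a boolean
   relation: (v_i, v_j) \in E  iff  E i j. Self loops are allowed. *)

Definition strongly_connected (n : nat) (E : rel 'I_n) : Prop :=
  forall i j : 'I_n, i != j -> connect E i j.

Definition in_Adj (R : realType) (n : nat) (E : rel 'I_n) (A : 'M[R]_n) : Prop :=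
  forall i j : 'I_n, (E i j -> 0 < A i j) /\ (~~ E i j -> A i j = 0).

Definition imbalance (R : realType) (n : nat) (A : 'M[R]_n) (i : 'I_n) : R :=
  \sum_(j < n) A j i - \sum_(j < n) A i j.

Definition weight_balanced (R : realType) (n : nat) (A : 'M[R]_n) : Prop :=
  forall i : 'I_n, imbalance A i = 0.

Definition in_Jstar (R : realType) (n : nat) (A : 'M[R]_n) (i j : 'I_n) : Prop :=
  j != i /\ A i j != 0 /\ (forall k : 'I_n, k != i -> A i k != 0 -> A i j <= A i k).

Definition f_imcor (R : realType) (n : nat) (E : rel 'I_n) (A B : 'M[R]_n) : Prop :=
  in_Adj E B /\
  (forall i : 'I_n,
    if (0 < imbalance A i)%R then
      (exists js : 'I_n, in_Jstar A i js /\
        (forall j : 'I_n, B i j = (if j == js then A i j + imbalance A i else A i j)))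
    else (forall j : 'I_n, B i j = A i j)).

(* Main.v *)
Require Import Defs.
From mathcomp Require Import all_boot all_order all_algebra.
From mathcomp Require Import reals.
From mathcomp Require Import lra.
From Stdlib Require Import Classical.
Import Order.TTheory GRing.Theory Num.Theory.
Local Open Scope ring_scope.

Lemma stab_nat (f : nat -> nat) : (forall k, (f k.+1 <= f k)%N) ->
  exists K, forall k, (K <= k)%N -> f k = f K.
Proof.
move=> hf.
have mono : forall k k', (k <= k')%N -> (f k' <= f k)%N.
  move=> k k'; elim: k' => [|k' IH]; first by rewrite leqn0 => /eqP ->.
  rewrite leq_eqVlt => /orP [/eqP -> //| ]; rewrite ltnS => /IH.
  exact: leq_trans (hf k').
suff: forall N K, (f K <= N)%N -> exists K', forall k, (K' <= k)%N -> f k = f K'.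
  by move/(_ (f 0%N) 0%N (leqnn _)).
elim=> [|N IH] K hK.
  exists K => k hk; apply/eqP; rewrite eqn_leq mono //=.
  by rewrite (leq_trans hK).
case: (classic (exists k, (K <= k)%N /\ (f k < f K)%N)) => [[k [hk hlt]]|hno].
  by apply: (IH k); rewrite -ltnS (leq_trans hlt).
exists K => k hk; apply/eqP; rewrite eqn_leq mono //=.
by rewrite leqNgt; apply/negP => h; apply: hno; exists k.
Qed.

Lemma fin_bound (n : nat) (P : 'I_n -> nat -> Prop) :
  (forall i, exists t, forall k, (t <= k)%N -> P i k) ->
  exists T, forall i k, (T <= k)%N -> P i k.
Proof.
move=> h.
suff: forall s : seq 'I_n, exists T, forall i, i \in s -> forall k, (T <= k)%N -> P i k.
  by case/(_ (enum 'I_n)) => T hT; exists T => i k hk; apply: hT; rewrite ?mem_enum.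
elim=> [|a s [T hT]]; first by exists 0%N.
have [t ht] := h a.
exists (maxn t T) => i; rewrite inE => /orP [/eqP -> | hi] k hk.
  by apply: ht; rewrite (leq_trans _ hk) // leq_maxl.
by apply: hT => //; rewrite (leq_trans _ hk) // leq_maxr.
Qed.

Lemma growth (R : realType) (u : nat -> R) (k1 : nat) (m B : R) :
  0 < m -> (forall k, (k1 <= k)%N -> u k <= u k.+1) ->
  (forall k, (k1 <= k)%N -> u k <= B) ->
  (forall k, (k1 <= k)%N -> exists k', (k <= k')%N /\ u k' + m <= u k'.+1) -> False.
Proof.
move=> m0 hmono hB hj.
have mono : forall k k', (k1 <= k)%N -> (k <= k')%N -> u k <= u k'.
  move=> k k' hk; elim: k' => [|k' IH]; first by rewrite leqn0 => /eqP ->.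
  rewrite leq_eqVlt => /orP [/eqP -> //| ]; rewrite ltnS => hk'.
  apply: le_trans (IH hk') _; apply: hmono; exact: leq_trans hk'.
have big : forall N : nat, exists k, (k1 <= k)%N /\ u k1 + N%:R * m <= u k.
  elim=> [|N [k [hk hN]]]; first by exists k1; rewrite mul0r addr0.
  have [k' [hkk' hk']] := hj k hk.
  exists k'.+1; split; first by rewrite (leq_trans hk) // (leq_trans hkk').
  have := mono _ _ hk hkk'.
  rewrite -addn1 natrD mulrDl mul1r; lra.
have h0 : 0 <= (B - u k1) / m.
  by rewrite divr_ge0 ?(ltW m0) // subr_ge0 hB.
have := archi_boundP h0; rewrite ltr_pdivrMr //.
move: (Num.Def.archi_bound _) => N hN.
have [k [hk hk2]] := big N.
have := hB k hk; lra.
Qed.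

Definition minr (R : realType) (a b : R) := if a <= b then a else b.
Arguments minr {R}.

Lemma minr_mono (R : realType) (a a' b : R) : a <= a' -> minr a b <= minr a' b.
Proof. rewrite /minr; case: ifP; case: ifP; lra. Qed.
Lemma minr_le (R : realType) (a b : R) : minr a b <= b.
Proof. rewrite /minr; case: ifP; lra. Qed.
Lemma minr_ge0 (R : realType) (a b : R) : 0 <= a -> 0 <= b -> 0 <= minr a b.
Proof. rewrite /minr; case: ifP; lra. Qed.
Lemma minr_ge (R : realType) (x a b : R) : x <= a -> x <= b -> x <= minr a b.
Proof. rewrite /minr; case: ifP; lra. Qed.
Lemma minr_l (R : realType) (a b : R) : a <= b -> minr a b = a.
Proof. by rewrite /minr => ->. Qed.

Section Main.
Variables (R : realType) (n : nat) (E : rel 'I_n) (A : nat -> 'M[R]_n).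
Hypothesis hSC : strongly_connected E.
Hypothesis h0 : in_Adj E (A 0%N).
Hypothesis hf : forall k : nat, f_imcor E (A k) (A k.+1).

Local Notation w k i := (imbalance (A k) i).

Lemma adjA k : in_Adj E (A k).
Proof. by case: k => [|k] //; case: (hf k). Qed.

Lemma row_spec k i :
  if (0 < w k i)%R then
      (exists js : 'I_n, in_Jstar (A k) i js /\
        (forall j : 'I_n, A k.+1 i j = (if j == js then A k i j + w k i else A k i j)))
    else (forall j : 'I_n, A k.+1 i j = A k i j).
Proof. by case: (hf k) => _; apply. Qed.

Lemma monoA k i j : A k i j <= A k.+1 i j.
Proof.
have := row_spec k i; case: ifP => pos.
  case=> js [_ H]; rewrite H; case: eqP => _ //; lra.
by move=> H; rewrite H.
Qed.

Lemma rowsum k i : \sum_j A k.+1 i j = \sum_j A k i j + (if 0 < w k i then w k i else 0).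
Proof.
have := row_spec k i; case: ifP => pos.
  case=> js [_ H]; rewrite (bigD1 js) //= [in RHS](bigD1 js) //= H eqxx.
  rewrite (eq_bigr (fun j => A k i j)); first by rewrite addrAC.
  by move=> j /negbTE hj; rewrite H hj.
by move=> H; rewrite addr0; apply: eq_bigr => j _; rewrite H.
Qed.

Definition d k j l := A k.+1 j l - A k j l.

Lemma d_ge0 k j l : 0 <= d k j l.
Proof. by rewrite /d subr_ge0 monoA. Qed.

Lemma d_sel k j l : A k.+1 j l != A k j l -> 0 < w k j /\ d k j l = w k j.
Proof.
have := row_spec k j; case: ifP => pos.
  case=> js [_ H]; rewrite /d H; case: (l =P js) => _; last by rewrite eqxx.
  by move=> _; split => //; rewrite addrAC subrr add0r.
by move=> H; rewrite H eqxx.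
Qed.

Lemma L1 k l : w k.+1 l = (if 0 < w k l then 0 else w k l) + \sum_j d k j l.
Proof.
rewrite /d sumrB [w k.+1 l]/imbalance rowsum /imbalance.
move: (\sum_j A k.+1 j l) (\sum_j A k j l) (\sum_j A k l j) => a b c.
case: ifP => _; lra.
Qed.

Lemma L1ge k l j : (if 0 < w k l then 0 else w k l) + d k j l <= w k.+1 l.
Proof.
rewrite L1 lerD2l (bigD1 j) //= lerDl.
by apply: sumr_ge0 => i _; apply: d_ge0.
Qed.

Lemma nonneg_step k l : 0 <= w k l -> 0 <= w k.+1 l.
Proof.
move=> h; apply: le_trans (L1ge k l l); have := d_ge0 k l l.
case: ifP => _; lra.
Qed.

Lemma neg_step k l : w k l < 0 -> w k l <= w k.+1 l.
Proof.
move=> h; apply: le_trans (L1ge k l l); have := d_ge0 k l l.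
case: ifP => _; lra.
Qed.

Lemma sum_w k : \sum_i w k i = 0.
Proof. by rewrite /imbalance sumrB exchange_big subrr. Qed.

Lemma pos_exists k : (exists l, w k l < 0) -> exists l, 0 < w k l.
Proof.
case=> s hs; apply: NNPP => hno.
have hle : forall l, 0 <= - w k l.
  move=> l; rewrite oppr_ge0 leNgt; apply/negP => hl; apply: hno; by exists l.
have := @psumr_eq0P _ _ predT (fun l => - w k l) (fun l _ => hle l).
rewrite sumrN sum_w oppr0 => /(_ erefl s erefl) /eqP; rewrite oppr_eq0 => /eqP.
lra.
Qed.

Lemma balanced_step k : weight_balanced (A k) -> A k.+1 = A k.
Proof.
move=> hb; apply/matrixP => i j; have := row_spec k i.
by rewrite hb ltxx => ->.
Qed.

Definition negs k := [set l | w k l < 0].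

Lemma negs_sub k k' : (k <= k')%N -> negs k' \subset negs k.
Proof.
elim: k' => [|k' IH]; first by rewrite leqn0 => /eqP ->.
rewrite leq_eqVlt => /orP [/eqP -> //| ]; rewrite ltnS => /IH h.
apply: subset_trans h; apply/subsetP => l; rewrite !inE !ltNge.
by apply: contra; apply: nonneg_step.
Qed.

Definition inf i := forall k, exists k', (k <= k')%N /\ 0 < w k' i.
Definition sel k i j := 0 < w k i /\ A k.+1 i j != A k i j.

Lemma wander K1 : (forall k, (K1 <= k)%N -> negs k = negs K1) ->
  (exists s, w K1 s < 0) -> False.
Proof.
move=> hst [s hs].
have hS : forall k l, (K1 <= k)%N -> (w k l < 0) = (l \in negs K1).
  by move=> k l hk; rewrite -(hst k hk) inE.
have [p0 hp0] := @pos_exists K1 (ex_intro _ s hs).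
have [m [m0 hm]] : exists m, 0 < m /\ forall l, 0 < w K1 l -> m <= w K1 l.
  case: (@arg_minP _ _ _ p0 (fun l => 0 < w K1 l) (fun l => w K1 l) hp0) => i hi hmin.
  by exists (w K1 i); split => // l hl; apply: hmin.
have hm' : forall k l, (K1 <= k)%N -> 0 < w k l -> m <= w k l.
  move=> k l; elim: k l => [|k IH] l.
    by rewrite leqn0 => /eqP <-; apply: hm.
  rewrite leq_eqVlt => /orP [/eqP <- | ]; first by apply: hm.
  rewrite ltnS => hk hpos.
  have hl : l \notin negs K1.
    by rewrite -(hS k.+1 l) ?(leq_trans hk) // -leNgt ltW.
  have hl0 : 0 <= w k l by rewrite leNgt hS.
  have [j hj] : exists j, 0 < d k j l.
    apply: NNPP => hno; move: hpos; rewrite L1.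
    have -> : \sum_j d k j l = 0.
      apply: big1 => j _; apply/eqP; rewrite eq_le d_ge0 andbT leNgt.
      by apply/negP => h; apply: hno; exists j.
    by case: ifP => hc; rewrite addr0 => h; [rewrite ltxx in h | rewrite h in hc].
  have [hjpos hdj] : 0 < w k j /\ d k j l = w k j.
    by apply: d_sel; move: hj; rewrite /d subr_gt0 => /gt_eqF ->.
  have := L1ge k l j; rewrite hdj.
  have := IH j hk hjpos.
  case: ifP => _; lra.
have [i0 hi0] : exists i, inf i.
  apply: NNPP => hno.
  have : forall i, exists t, forall k, (t <= k)%N -> ~ (0 < w k i).
    move=> i; apply: NNPP => hn; apply: hno; exists i => k; apply: NNPP => hk.
    by apply: hn; exists k => k' hk' hp; apply: hk; exists k'.
  case/fin_bound => T hT.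
  have hs' : w (maxn T K1) s < 0 by rewrite hS ?leq_maxr // -(hS K1) ?leqnn.
  have [l hl] := @pos_exists (maxn T K1) (ex_intro _ s hs').
  exact: hT l (maxn T K1) (leq_maxl _ _) hl.
have hinfS : forall i, inf i -> i \notin negs K1.
  move=> i /(_ K1) [k [hk hp]]; by rewrite -(hS k i hk) -leNgt ltW.
have claimA : forall i j, inf i -> j != i -> E i j ->
    forall k, exists k', (k <= k')%N /\ sel k' i j.
  move=> i j hi hji hE; apply: NNPP => hno.
  have [k0 hk0] : exists k0, forall k', (k0 <= k')%N -> ~ sel k' i j.
    apply: NNPP => hn; apply: hno => k; apply: NNPP => hk; apply: hn.
    by exists k => k' hk' hs1; apply: hk; exists k'.
  set k1 := maxn k0 K1.
  have hc : forall k, (k1 <= k)%N -> A k i j = A k1 i j.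
    elim=> [|k IH]; first by rewrite leqn0 => /eqP ->.
    rewrite leq_eqVlt => /orP [/eqP <- // | ]; rewrite ltnS => hk.
    rewrite -(IH hk).
    have := row_spec k i; case: ifP => pos; last by move=> ->.
    move=> _; apply/eqP; apply: NNPP => hne; apply: (hk0 k).
      by rewrite (leq_trans _ hk) // leq_maxl.
    by split => //; apply/negP.
  set c := A k1 i j.
  pose Psi k := \sum_l minr (A k i l) (c + m).
  apply: (@growth R Psi k1 m ((c + m) *+ n) m0).
  - move=> k _; apply: ler_sum => l _; apply: minr_mono; apply: monoA.
  - move=> k _; rewrite /Psi.
    apply: le_trans (_ : \sum_(l < n) (c+m) <= _).
      by apply: ler_sum => l _; apply: minr_le.
    by rewrite sumr_const card_ord.
  - move=> k hk; have [k' [hkk' hp]] := hi k.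
    exists k'; split => //.
    have hk1' : (k1 <= k')%N := leq_trans hk hkk'.
    have := row_spec k' i; rewrite hp => -[js [[hjsi [hjs0 hmin]] H]].
    have hAij : A k' i js <= c.
      have -> : c = A k' i j by rewrite /c hc.
      apply: hmin => //.
      by have := (adjA k' i j).1 hE; rewrite lt0r => /andP [].
    have hmk : m <= w k' i := hm' k' i (leq_trans (leq_maxr _ _) hk1') hp.
    rewrite /Psi (bigD1 js) //= [X in _ <= X](bigD1 js) //= H eqxx.
    rewrite [X in _ <= _ + X](eq_bigr (fun l => minr (A k' i l) (c + m))); last first.
      by move=> l /negbTE hl; rewrite H hl.
    have h1 : A k' i js + m <= minr (A k' i js + w k' i) (c + m).
      by apply: minr_ge; lra.
    rewrite [minr (A k' i js) _]minr_l; last lra.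
    lra.
have claimB : forall i j, (forall k, exists k', (k <= k')%N /\ sel k' i j) -> inf j.
  move=> i j hsel.
  case: (boolP (j \in negs K1)) => hjS.
  - exfalso; apply: (@growth R (fun k => w k j) K1 m 0 m0).
    + by move=> k hk; apply: neg_step; rewrite hS.
    + by move=> k hk; apply: ltW; rewrite hS.
    + move=> k hk; have [k' [hkk' [hp hne]]] := hsel k; exists k'; split => //.
      have [_ hd] := d_sel k' i j hne; have := L1ge k' j i; rewrite hd.
      have hneg : w k' j < 0 by rewrite hS // (leq_trans hk).
      have := hm' k' i (leq_trans hk hkk') hp.
      have -> : (0 < w k' j) = false by apply/negbTE; rewrite -leNgt ltW.
      lra.
  - move=> k; have [k' [hkk' [hp hne]]] := hsel (maxn k K1).
    exists k'.+1; split; first by apply: leqW; exact: leq_trans (leq_maxl k K1) hkk'.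
    have hK : (K1 <= k')%N := leq_trans (leq_maxr _ _) hkk'.
    have [_ hd] := d_sel k' i j hne; have := L1ge k' j i; rewrite hd.
    have hnn : 0 <= w k' j by rewrite leNgt hS.
    have := hm' k' i hK hp.
    case: ifP => _; lra.
have hpath : forall p x, inf x -> path E x p -> inf (last x p).
  elim=> [|y p IH] x hx //= /andP [hxy hp]; apply: IH hp.
  case: (y =P x) => [-> // | /eqP hyx]; exact: claimB _ _ (claimA _ _ hx hyx hxy).
have hs_in : s \in negs K1 by rewrite -(hS K1).
have hne : i0 != s by apply/eqP => e; move: (hinfS _ hi0); rewrite e hs_in.
have /connectP [p hp es] := hSC i0 s hne.
by move: (hinfS _ (hpath p i0 hi0 hp)); rewrite -es hs_in.
Qed.

Lemma main_sec : exists K, weight_balanced (A K) /\ forall k, (K <= k)%N -> A k = A K.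
Proof.
have [K1 hK1] := (@stab_nat (fun k => #|negs k|))
  (fun k => subset_leq_card (@negs_sub k k.+1 (leqnSn k))).
have hst : forall k, (K1 <= k)%N -> negs k = negs K1.
  by move=> k hk; apply/eqP; rewrite eqEcard negs_sub //= (hK1 k hk).
case: (classic (exists s, w K1 s < 0)) => [hex|hno]; first by case: (@wander K1 hst hex).
have hb : weight_balanced (A K1).
  have hle : forall l, 0 <= w K1 l.
    by move=> l; rewrite leNgt; apply/negP => h; apply: hno; exists l.
  move=> l; exact: (@psumr_eq0P _ _ predT (fun l => w K1 l) (fun l _ => hle l) (sum_w K1) l erefl).
exists K1; split => //.
elim=> [|k IH]; first by rewrite leqn0 => /eqP ->.
rewrite leq_eqVlt => /orP [/eqP <- // | ]; rewrite ltnS => hk.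
by rewrite balanced_step ?(IH hk).
Qed.

End Main.

Theorem theorem4p4 (R : realType) (n : nat) (E : rel 'I_n)
  (A : nat -> 'M[R]_n) :
  strongly_connected E ->
  in_Adj E (A 0%N) ->
  (forall k : nat, f_imcor E (A k) (A k.+1)) ->
  exists K : nat, weight_balanced (A K) /\ (forall k : nat, (K <= k)%N -> A k = A K).
Proof. move=> hSC h0 hf; exact: main_sec hSC h0 hf. Qed.
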